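(* Let $z>0$, $\zeta=(z/2)^{1/3}$, and $V_0=\frac{5}{36z^2}-\frac{1}{4(z/2)^{2/3}}=\frac{5-36\zeta^4}{144\zeta^6}$. Let $a,c$ be nonzero constants and $A_{m,k}$ ($m,k\ge0$) the coefficients defined below. For $n\in\mathbb Z\setminus\{0\}$ with $\delta=\operatorname{sgn}(n)$ set $$\psi_n=\zeta^{1/2}e^{-\frac32\delta\zeta^2}\sum_{k=0}^{2|n|-2}A_{|n|-1,k}(\delta\zeta^2)^k,$$ and $\psi_0=0$. Then for all $n\ne0$, $$\frac{\mathrm d^2\psi_n}{\mathrm dz^2}+V_0\psi_n=-\delta\,a\,\psi_{n-\delta}.$$
   Context: The coefficients $A_{m,k}$, $m,k\in\mathbb Z_{\ge0}$ (set to $0$ if an index is negative), are determined by $A_{0,0}=c$, $A_{0,k}=0$ ($k\ge1$), and for $m\ge1$: $A_{m,0}=0$, $A_{m,2m}=\big(\tfrac{3a}{2}\big)^m\frac{c}{m!}$, $A_{m,k}=\frac{3a}{k}A_{m-1,k-2}+\frac{k+1}{3}A_{m,k+1}$ for $k\ge2$, and $A_{m,1}=\frac23A_{m,2}$ (with these conditions $A_{m,k}=0$ for $k>2m$). *)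

(* Defs.v *)
From Stdlib Require Import Reals ZArith Lra.
From Coquelicot Require Import Coquelicot.
Open Scope R_scope.

(* For m = M >= 1: A_{M,2M} = (3a/2)^M c / M!, and for 2 <= k < 2M,
   A_{M,k} = 3a/k * A_{M-1,k-2} + (k+1)/3 * A_{M,k+1} (computed downward
   via g j = A_{M,2M-j}); A_{M,1} = 2/3 A_{M,2}; A_{M,0} = 0;
   A_{M,k} = 0 for k > 2M. *)
Fixpoint Arow (a c : R) (m : nat) : nat -> R :=
  match m with
  | O => fun k => if Nat.eqb k 0 then c else 0
  | S m' =>
      let prev := Arow a c m' in
      let M := S m' in
      let fix g (j : nat) : R :=
        match j with
        | O => (3 * a / 2) ^ M * c / INR (fact M)
        | S j' =>
            let k := (2 * M - j)%nat in
            3 * a / INR k * prev (k - 2)%nat + (INR k + 1) / 3 * g j'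
        end in
      fun k =>
        if Nat.eqb k 0 then 0
        else if Nat.eqb k 1 then 2 / 3 * g (2 * M - 2)%nat
        else if Nat.leb k (2 * M) then g (2 * M - k)%nat
        else 0
  end.

Definition A (a c : R) (m k : nat) : R := Arow a c m k.

Definition zeta (z : R) : R := Rpower (z / 2) (1 / 3).

Definition V0 (z : R) : R := 5 / (36 * z ^ 2) - 1 / (4 * Rpower (z / 2) (2 / 3)).

(* psi_n(z); psi_0 = 0. delta = sgn n. sum_f_R0 f N = f 0 + ... + f N. *)
Definition psi (a c : R) (n : Z) (z : R) : R :=
  if Z.eqb n 0 then 0 else
  let d := IZR (Z.sgn n) in
  let m := Z.abs_nat n in
  sqrt (zeta z) * exp (- (3 / 2) * d * (zeta z) ^ 2) *
  sum_f_R0 (fun k => A a c (m - 1) k * (d * (zeta z) ^ 2) ^ k) (2 * m - 2)%nat.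

(* Main.v *)
Require Import Defs.
From Stdlib Require Import Reals ZArith Lra Lia FunctionalExtensionality.
From Coquelicot Require Import Coquelicot.
Open Scope R_scope.


Lemma is_derive_eq (f : R -> R) (x l l' : R) : is_derive f x l -> l = l' -> is_derive f x l'.
Proof. intros H <-; exact H. Qed.

Lemma zeta_pos z : 0 < zeta z.
Proof. unfold zeta, Rpower. apply exp_pos. Qed.

Lemma zeta_pow z n : 0 < z -> zeta z ^ n = Rpower (z / 2) (1/3 * INR n).
Proof.
  intros Hz. unfold zeta. rewrite <- Rpower_pow by (unfold Rpower; apply exp_pos).
  rewrite Rpower_mult. reflexivity.
Qed.

Lemma zeta_cube z : 0 < z -> z = 2 * zeta z ^ 3.
Proof.
  intros Hz. rewrite zeta_pow by lra. replace (1/3 * INR 3) with 1 by (simpl; field).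
  rewrite Rpower_1 by lra. field.
Qed.

Lemma zeta_sq z : 0 < z -> Rpower (z / 2) (2 / 3) = zeta z ^ 2.
Proof.
  intros Hz. rewrite zeta_pow by lra. f_equal. simpl. field.
Qed.

Lemma zeta_der z : 0 < z -> is_derive zeta z (/ (6 * zeta z ^ 2)).
Proof.
  intros Hz. pose proof (zeta_cube z Hz) as Hc. pose proof (zeta_pos z) as Hp.
  unfold zeta, Rpower in *. auto_derive.
  - lra.
  - change (z * / 2) with (z / 2). set (t := exp (1 / 3 * ln (z / 2))) in *. clearbody t.
    subst z. field. lra.
Qed.

Lemma ball_pos z (Hz : 0 < z) y : ball z (mkposreal z Hz) y -> 0 < y.
Proof.
  intros H. unfold ball in H; simpl in H. unfold AbsRing_ball, abs, minus, plus, opp in H.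
  simpl in H. apply Rabs_def2 in H. simpl in H. lra.
Qed.

Lemma chain2 (F F1 F2 : R -> R) z : 0 < z ->
  (forall t, 0 < t -> is_derive F t (F1 t)) ->
  (forall t, 0 < t -> is_derive F1 t (F2 t)) ->
  ex_derive (fun y => F (zeta y)) z /\
  is_derive (Derive (fun y => F (zeta y))) z
    (F2 (zeta z) / (36 * zeta z ^ 4) - F1 (zeta z) / (18 * zeta z ^ 5)).
Proof.
  intros Hz HF HF1.
  assert (D1 : forall y, 0 < y -> is_derive (fun y => F (zeta y)) y (/ (6 * zeta y ^ 2) * F1 (zeta y))).
  { intros y Hy. apply (is_derive_comp F zeta y). apply HF, zeta_pos. apply zeta_der, Hy. }
  split. { eexists. apply D1, Hz. }
  apply is_derive_ext_loc with (fun y => / (6 * zeta y ^ 2) * F1 (zeta y)).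
  { exists (mkposreal z Hz). intros y Hy. apply ball_pos in Hy.
    symmetry. apply is_derive_unique. apply D1, Hy. }
  assert (Dh : is_derive (fun y => / (6 * zeta y ^ 2)) z (/ (6 * zeta z ^ 2) * (- (12 * zeta z) / (6 * zeta z ^ 2) ^ 2))).
  { apply (is_derive_comp (fun t => / (6 * t ^ 2)) zeta z).
    2: apply zeta_der, Hz.
    pose proof (zeta_pos z). assert (zeta z <> 0) by lra. auto_derive. { apply Rmult_integral_contrapositive; split; [lra|]. rewrite Rmult_1_r. apply Rmult_integral_contrapositive; auto. } field. auto. }
  assert (Dg : is_derive (fun y => F1 (zeta y)) z (/ (6 * zeta z ^ 2) * F2 (zeta z))).
  { apply (is_derive_comp F1 zeta z). apply HF1, zeta_pos. apply zeta_der, Hz. }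
  eapply is_derive_eq.
  { apply (is_derive_mult (fun y => / (6 * zeta y ^ 2)) (fun y => F1 (zeta y))); [exact Dh|exact Dg|].
    intros; apply Rmult_comm. }
  pose proof (zeta_pos z). unfold plus, mult; simpl. field. lra.
Qed.

Definition Fd d (P : R -> R) t := sqrt t * exp (- (3 / 2) * d * t ^ 2) * P (d * t ^ 2).
Definition F1d d (P P1 : R -> R) t := exp (- (3 / 2) * d * t ^ 2) *
  (P (d * t ^ 2) / (2 * sqrt t) - 3 * d * t * sqrt t * P (d * t ^ 2)
   + 2 * d * t * sqrt t * P1 (d * t ^ 2)).
Definition F2d d (P P1 P2 : R -> R) t :=
  let s := sqrt t in let E := exp (- (3 / 2) * d * t ^ 2) in
  let Q := P (d * t ^ 2) in let Q1 := P1 (d * t ^ 2) in let Q2 := P2 (d * t ^ 2) in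
  E * (- 3 * d * t * (Q / (2 * s) - 3 * d * t * s * Q + 2 * d * t * s * Q1)
   + ((2 * d * t * Q1) / (2 * s) - Q / (4 * (s * s * s)) - 3 * d * s * Q
      - 3 * d * t * Q / (2 * s) - 3 * d * t * s * (2 * d * t * Q1) + 2 * d * s * Q1
      + 2 * d * t * Q1 / (2 * s) + 2 * d * t * s * (2 * d * t * Q2))).

Lemma F_der d P P1 t : 0 < t -> (forall x, is_derive P x (P1 x)) ->
  is_derive (Fd d P) t (F1d d P P1 t).
Proof.
  intros Ht HP. assert (HD : forall y, Derive (fun x => P x) y = P1 y)
    by (intros y; apply is_derive_unique, HP).
  assert (Hs : 0 < sqrt t) by (apply sqrt_lt_R0; lra).
  unfold Fd, F1d. auto_derive.
  - repeat split; try lra. eexists; apply HP.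
  - rewrite HD. replace (t * (t * 1)) with (t ^ 2) by ring. field. lra.
Qed.

Lemma F1_der d P P1 P2 t : 0 < t -> (forall x, is_derive P x (P1 x)) ->
  (forall x, is_derive P1 x (P2 x)) ->
  is_derive (F1d d P P1) t (F2d d P P1 P2 t).
Proof.
  intros Ht HP HP1. assert (HD : forall y, Derive (fun x => P x) y = P1 y)
    by (intros y; apply is_derive_unique, HP).
  assert (HD1 : forall y, Derive (fun x => P1 x) y = P2 y)
    by (intros y; apply is_derive_unique, HP1).
  assert (Hs : 0 < sqrt t) by (apply sqrt_lt_R0; lra).
  unfold F2d, F1d. auto_derive.
  - repeat split; try lra; eexists; (apply HP || apply HP1).
  - rewrite HD, HD1. replace (t * (t * 1)) with (t ^ 2) by ring. field. lra.
Qed.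

Lemma ode_generic a d (P P1 P2 Pp : R -> R) z : 0 < z -> (d = 1 \/ d = -1) ->
  (forall x, is_derive P x (P1 x)) -> (forall x, is_derive P1 x (P2 x)) ->
  (forall x, 3 * P1 x - P2 x = 9 * a * x * Pp x) ->
  ex_derive (fun y => Fd d P (zeta y)) z /\
  is_derive (Derive (fun y => Fd d P (zeta y))) z
    (- V0 z * Fd d P (zeta z) - d * a * Fd d Pp (zeta z)).
Proof.
  intros Hz Hd HP HP1 Hrel.
  destruct (chain2 (Fd d P) (F1d d P P1) (F2d d P P1 P2) z Hz) as [Hex Hder].
  { intros t Ht; apply F_der; auto. }
  { intros t Ht; apply F1_der; auto. }
  split; [exact Hex|]. eapply is_derive_eq; [exact Hder|].
  pose proof (zeta_cube z Hz) as Hc. pose proof (zeta_pos z) as Htp.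
  unfold V0. rewrite zeta_sq by exact Hz.
  unfold F2d, F1d, Fd.
  set (t := zeta z) in *. clearbody t. subst z.
  specialize (Hrel (d * t ^ 2)).
  set (E := exp (- (3 / 2) * d * t ^ 2)) in *.
  set (Q := P (d * t ^ 2)) in *. set (Q1 := P1 (d * t ^ 2)) in *.
  set (Q2 := P2 (d * t ^ 2)) in *. set (Qp := Pp (d * t ^ 2)) in *.
  clearbody E Q Q1 Q2 Qp.
  assert (HQ2 : Q2 = 3 * Q1 - 9 * a * (d * t ^ 2) * Qp) by lra. subst Q2.
  assert (Hs : 0 < sqrt t) by (apply sqrt_lt_R0; lra).
  assert (Ht : t = sqrt t * sqrt t) by (rewrite sqrt_sqrt; lra).
  set (s := sqrt t) in *. clearbody s. subst t.
  clear Hder Hex HP HP1 Hrel. destruct Hd as [-> | ->]; field; lra.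
Qed.


Definition gA (a c : R) (m' : nat) : nat -> R :=
  fix g (j : nat) : R :=
    match j with
    | O => (3 * a / 2) ^ S m' * c / INR (fact (S m'))
    | S j' => 3 * a / INR (2 * S m' - j) * Arow a c m' (2 * S m' - j - 2) +
              (INR (2 * S m' - j) + 1) / 3 * g j'
    end.

Lemma A_S a c m' k : A a c (S m') k =
  if Nat.eqb k 0 then 0 else if Nat.eqb k 1 then 2/3 * gA a c m' (2 * S m' - 2)
  else if Nat.leb k (2 * S m') then gA a c m' (2 * S m' - k) else 0.
Proof. reflexivity. Qed.

Lemma gA_S a c m' j : gA a c m' (S j) =
  3 * a / INR (2 * S m' - S j) * A a c m' (2 * S m' - S j - 2) +
  (INR (2 * S m' - S j) + 1) / 3 * gA a c m' j.
Proof. reflexivity. Qed.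

Lemma A_0 a c k : A a c 0 k = if Nat.eqb k 0 then c else 0.
Proof. reflexivity. Qed.

Lemma A_big a c M k : (2 * M < k)%nat -> A a c M k = 0.
Proof.
  intros H. destruct M as [|m'].
  - rewrite A_0. destruct (Nat.eqb_spec k 0); [lia|reflexivity].
  - rewrite A_S. destruct (Nat.eqb_spec k 0); [lia|].
    destruct (Nat.eqb_spec k 1); [lia|].
    destruct (Nat.leb_spec k (2 * S m')); [lia|reflexivity].
Qed.

Lemma A_top a c M : A a c M (2 * M) = (3 * a / 2) ^ M * c / INR (fact M).
Proof.
  destruct M as [|m'].
  - rewrite A_0. simpl. field.
  - rewrite A_S. destruct (Nat.eqb_spec (2 * S m') 0); [lia|].
    destruct (Nat.eqb_spec (2 * S m') 1); [lia|].
    destruct (Nat.leb_spec (2 * S m') (2 * S m')); [|lia].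
    replace (2 * S m' - 2 * S m')%nat with 0%nat by lia. reflexivity.
Qed.

Lemma A_mid a c m' j : (2 <= j < 2 * S m')%nat ->
  A a c (S m') j = 3 * a / INR j * A a c m' (j - 2) + (INR j + 1) / 3 * A a c (S m') (S j).
Proof.
  intros H. rewrite A_S. destruct (Nat.eqb_spec j 0); [lia|].
  destruct (Nat.eqb_spec j 1); [lia|].
  destruct (Nat.leb_spec j (2 * S m')); [|lia].
  replace (2 * S m' - j)%nat with (S (2 * S m' - S j)) by lia.
  rewrite gA_S. replace (2 * S m' - S (2 * S m' - S j))%nat with j by lia.
  rewrite (A_S a c m' (S j)). simpl Nat.eqb.
  destruct (Nat.eqb_spec j 0); [lia|].
  destruct (Nat.leb_spec (S j) (2 * S m')); [|lia]. reflexivity.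
Qed.

Lemma A_one a c m' : A a c (S m') 1 = 2/3 * A a c (S m') 2.
Proof.
  rewrite !A_S. simpl Nat.eqb.
  destruct (Nat.leb_spec 2 (2 * S m')); [|lia]. reflexivity.
Qed.

Lemma A_rel a c m' j : (2 <= j)%nat ->
  3 * INR j * A a c (S m') j - INR j * INR (S j) * A a c (S m') (S j)
  = 9 * a * A a c m' (j - 2).
Proof.
  intros H. assert (Hj : INR j <> 0) by (apply not_0_INR; lia).
  destruct (lt_eq_lt_dec j (2 * S m')) as [[Hl|He]|Hg].
  - rewrite (A_mid a c m' j) by lia. rewrite S_INR. field. exact Hj.
  - subst j. rewrite (A_big a c (S m') (S (2 * S m'))) by lia.
    rewrite A_top. replace (2 * S m' - 2)%nat with (2 * m')%nat by lia.
    rewrite A_top. rewrite fact_simpl, mult_INR.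
    assert (INR (fact m') <> 0) by apply INR_fact_neq_0.
    rewrite mult_INR. simpl pow. rewrite S_INR.
    change (INR 1) with 1. assert (INR (S m') <> 0) by (apply not_0_INR; lia). field. split; assumption.
  - rewrite !A_big by lia. ring.
Qed.


Definition db (b : nat -> R) (k : nat) : R := INR (S k) * b (S k).

Definition polyS (b : nat -> R) (N : nat) (x : R) : R := sum_f_R0 (fun k => b k * x ^ k) N.



Lemma poly_deriv b N x : is_derive (polyS b N) x
  (polyS (db b) N x - INR (S N) * b (S N) * x ^ N).
Proof.
  unfold db.
  induction N as [|N IH].
  - apply is_derive_ext with (fun _ => b 0%nat).
    { intros t. unfold polyS. simpl. ring. }
    apply is_derive_eq with 0. { auto_derive; auto. } unfold polyS; simpl; ring.
  - apply is_derive_ext with (fun y => polyS b N y + b (S N) * y ^ (S N)).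
    { intros t. reflexivity. }
    assert (H2 : is_derive (fun y => b (S N) * y ^ S N) x (INR (S N) * b (S N) * x ^ N)).
    { auto_derive. trivial. rewrite S_INR. destruct N; simpl; ring. }
    apply is_derive_eq with (plus (polyS (fun k => INR (S k) * b (S k)) N x - INR (S N) * b (S N) * x ^ N) (INR (S N) * b (S N) * x ^ N)).
    + apply (is_derive_plus (polyS b N) (fun y => b (S N) * y ^ S N)); assumption.
    + unfold plus; simpl. unfold polyS. simpl sum_f_R0. ring.
Qed.

Lemma polyS_lin (b1 b2 : nat -> R) al be N x :
  al * polyS b1 N x + be * polyS b2 N x = polyS (fun k => al * b1 k + be * b2 k) N x.
Proof. unfold polyS. induction N; simpl; [ring|rewrite <- IHN; ring]. Qed.

Lemma polyS_ext b1 b2 N x : (forall k, (k <= N)%nat -> b1 k = b2 k) -> polyS b1 N x = polyS b2 N x.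
Proof. intros H. unfold polyS. apply sum_eq. intros i Hi. rewrite H; auto. Qed.

Definition shift (b : nat -> R) (k : nat) : R := match k with O => 0 | S k' => b k' end.

Lemma polyS_shift b N x : polyS (shift b) (S N) x = x * polyS b N x.
Proof. unfold polyS. induction N; simpl in *; [ring|]. rewrite IHN. ring. Qed.


Lemma polyS_scal b al N x : polyS (fun k => al * b k) N x = al * polyS b N x.
Proof. unfold polyS. induction N; simpl; [ring|rewrite IHN; ring]. Qed.

Lemma psi_eq a c n : n <> 0%Z ->
  psi a c n = fun y => Fd (IZR (Z.sgn n)) (polyS (A a c (Z.abs_nat n - 1)) (2 * Z.abs_nat n - 2)) (zeta y).
Proof.
  intros Hn. apply functional_extensionality. intros y. unfold psi.
  destruct (Z.eqb_spec n 0); [contradiction|]. reflexivity.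
Qed.

Theorem mainTheorem11 :
  forall a c : R, a <> 0 -> c <> 0 ->
  forall n : Z, n <> 0%Z ->
  forall z : R, 0 < z ->
    ex_derive (psi a c n) z /\
    is_derive (Derive (psi a c n)) z
      (- V0 z * psi a c n z - IZR (Z.sgn n) * a * psi a c (n - Z.sgn n)%Z z).
Proof.
  intros a c Ha Hc n Hn z Hz.
  assert (Hd : IZR (Z.sgn n) = 1 \/ IZR (Z.sgn n) = -1)
    by (destruct n; simpl; auto; contradiction).
  assert (Hm : (1 <= Z.abs_nat n)%nat) by lia.
  rewrite (psi_eq a c n Hn).
  set (d := IZR (Z.sgn n)) in *.
  set (m := Z.abs_nat n) in *.
  destruct m as [|M] eqn:Em; [lia|].
  replace (S M - 1)%nat with M by lia.
  replace (2 * S M - 2)%nat with (2 * M)%nat by lia.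
  assert (HP : forall x, is_derive (polyS (A a c M) (2 * M)) x (polyS (db (A a c M)) (2 * M) x)).
  { intros x. eapply is_derive_eq. apply poly_deriv.
    rewrite (A_big a c M (S (2 * M))) by lia. ring. }
  assert (HP1 : forall x, is_derive (polyS (db (A a c M)) (2 * M)) x (polyS (db (db (A a c M))) (2 * M) x)).
  { intros x. eapply is_derive_eq. apply poly_deriv.
    unfold db. rewrite (A_big a c M (S (S (2 * M)))) by lia. ring. }
  destruct M as [|m'].
  -
    assert (Hz0 : (n - Z.sgn n)%Z = 0%Z) by lia.
    rewrite Hz0. unfold psi. simpl Z.eqb. cbv iota.
    destruct (ode_generic a d (polyS (A a c 0) (2 * 0)) (polyS (db (A a c 0)) (2 * 0)) (polyS (db (db (A a c 0))) (2 * 0))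
                (fun _ => 0) z Hz Hd HP HP1) as [H1 H2].
    { intros x. unfold db, polyS. simpl. ring. }
    split; [exact H1|]. eapply is_derive_eq; [exact H2|]. unfold Fd. ring.
  - assert (Hn' : (n - Z.sgn n)%Z <> 0%Z) by lia.
    rewrite (psi_eq a c (n - Z.sgn n) Hn').
    assert (Hs : Z.sgn (n - Z.sgn n) = Z.sgn n) by lia.
    assert (Ha' : Z.abs_nat (n - Z.sgn n) = S m') by lia.
    rewrite Hs, Ha'. fold d.
    replace (S m' - 1)%nat with m' by lia.
    replace (2 * S m' - 2)%nat with (2 * m')%nat by lia.
    destruct (ode_generic a d (polyS (A a c (S m')) (2 * S m')) (polyS (db (A a c (S m'))) (2 * S m'))
                (polyS (db (db (A a c (S m')))) (2 * S m')) (polyS (A a c m') (2 * m')) z Hz Hd HP HP1) as [H1 H2].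
    2: { split; [exact H1|]. exact H2. }
    intros x.
    replace (3 * polyS (db (A a c (S m'))) (2 * S m') x - polyS (db (db (A a c (S m')))) (2 * S m') x)
      with (3 * polyS (db (A a c (S m'))) (2 * S m') x + (-1) * polyS (db (db (A a c (S m')))) (2 * S m') x) by ring.
    rewrite polyS_lin.
    rewrite (polyS_ext _ (fun k => (9 * a) * shift (A a c m') k)).
    + rewrite polyS_scal. replace (2 * S m')%nat with (S (S (2 * m'))) by lia.
      rewrite polyS_shift.
      change (polyS (A a c m') (S (2 * m')) x) with
        (polyS (A a c m') (2 * m') x + A a c m' (S (2 * m')) * x ^ (S (2 * m'))).
      rewrite (A_big a c m' (S (2 * m'))) by lia. ring.
    + intros k _. unfold db. destruct k as [|k'].
      * simpl shift. rewrite A_one. simpl INR. field.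
      * pose proof (A_rel a c m' (S (S k')) ltac:(lia)) as R.
        simpl shift. simpl (S (S k') - 2)%nat in R. rewrite Nat.sub_0_r in R. rewrite <- R. ring.
Qed.
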